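(* Let $P$ be an integer such that $P^2+4$ is square-free, and let $m\ge 0$ be an integer. Consider the equation $$\sigma_2(n)-n^2=V_{2m}(P,-1)\,n+V_{2m}(P,-1)^2-3$$ in positive integers $n$. Then every solution $n$ with $n>\big(|V_{2m}(P,-1)|+V_{2m}(P,-1)^2-3\big)^3$ is of one of the following forms (so all solutions not of these forms lie in the finite, computable range $n\le(|V_{2m}(P,-1)|+V_{2m}(P,-1)^2-3)^3$): (1) $n=V_{2k+1}(P,-1)\,V_{2k+2m+1}(P,-1)$ for some integer $k\ge 0$, with $V_{2k+1}(P,-1)$ and $V_{2k+2m+1}(P,-1)$ both prime; (2) $n=V_{2k+1}(P,-1)\,V_{2m-2k-1}(P,-1)$ for some integer $k$ with $0\le k\le m-1$ and $m\ne 2k+1$, with $V_{2k+1}(P,-1)$ and $V_{2m-2k-1}(P,-1)$ both prime.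
   Context: For a positive integer $n$ and $k\ge 0$, $\sigma_k(n)=\sum_{d\mid n,\ d>0} d^k$. For integers $P,Q$, the Lucas sequences are defined for $j\ge 0$ by $U_0(P,Q)=0$, $U_1(P,Q)=1$, $U_j(P,Q)=P\,U_{j-1}(P,Q)-Q\,U_{j-2}(P,Q)$ for $j>1$, and $V_0(P,Q)=2$, $V_1(P,Q)=P$, $V_j(P,Q)=P\,V_{j-1}(P,Q)-Q\,V_{j-2}(P,Q)$ for $j>1$. An integer is square-free if it is not divisible by the square of any prime. *)

(* Defs.v *)
From mathcomp Require Import all_boot all_order all_algebra.
Set Implicit Arguments. Unset Strict Implicit. Unset Printing Implicit Defensive.
Import Order.TTheory GRing.Theory Num.Theory.
Local Open Scope ring_scope.

Definition sigma (k n : nat) : nat := (\sum_(d <- divisors n) d ^ k)%N.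

Fixpoint lucas_pair (P Q a0 a1 : int) (j : nat) : int * int :=
  match j with
  | 0%N => (a0, a1)
  | j'.+1 => let: (x, y) := lucas_pair P Q a0 a1 j' in (y, P * y - Q * x)
  end.

Definition lucasU (P Q : int) (j : nat) : int := (lucas_pair P Q 0 1 j).1.
Definition lucasV (P Q : int) (j : nat) : int := (lucas_pair P Q 2 P j).1.

Definition squarefree_int (x : int) : Prop :=
  forall p : nat, prime p -> ~ ((p%:Z * p%:Z) %| x)%Z.

(* Main.v *)
Require Import Defs.
From mathcomp Require Import all_boot all_order all_algebra.
From mathcomp Require Import zify ring lra.
Import Order.TTheory GRing.Theory Num.Theory.
Local Open Scope ring_scope.

Lemma lp_rec (P Q a0 a1 : int) j :
  (lucas_pair P Q a0 a1 j.+2).1 =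
  P * (lucas_pair P Q a0 a1 j.+1).1 - Q * (lucas_pair P Q a0 a1 j).1.
Proof. by rewrite /=; case: (lucas_pair P Q a0 a1 j). Qed.

Definition L (a : int) j := lucasV a (-1) j.
Definition U (a : int) j := lucasU a (-1) j.
Definition G (a x y : int) := x ^+ 2 - a * x * y - y ^+ 2.

Lemma Lrec a j : L a j.+2 = a * L a j.+1 + L a j.
Proof. rewrite /L /lucasV lp_rec; ring. Qed.
Lemma Urec a j : U a j.+2 = a * U a j.+1 + U a j.
Proof. rewrite /U /lucasU lp_rec; ring. Qed.

Lemma rec_eq a (f g : nat -> int) :
  (forall j, f j.+2 = a * f j.+1 + f j) ->
  (forall j, g j.+2 = a * g j.+1 + g j) ->
  f 0%N = g 0%N -> f 1%N = g 1%N -> forall j, f j = g j.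
Proof.
move=> hf hg h0 h1.
have: forall j, f j = g j /\ f j.+1 = g j.+1.
  elim=> [|j [e1 e2]]; first by [].
  by split=> //; rewrite hf hg e1 e2.
by move=> H j; case: (H j).
Qed.

Lemma G_alt a (f : nat -> int) :
  (forall j, f j.+2 = a * f j.+1 + f j) ->
  forall j, G a (f j.+1) (f j) = (-1) ^+ j * G a (f 1%N) (f 0%N).
Proof.
move=> hf; elim=> [|j IH]; first by rewrite expr0 mul1r.
rewrite exprS -mulrA -IH /G hf; ring.
Qed.

Lemma cassini a j : G a (U a j.+1) (U a j) = (-1) ^+ j.
Proof. by rewrite (G_alt _ _ (Urec a)) /G /U /lucasU /=; ring. Qed.

Lemma LG a j : G a (L a j.+1) (L a j) = - (-1) ^+ j * (a ^+ 2 + 4).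
Proof. by rewrite (G_alt _ _ (Lrec a)) /G /L /lucasV /=; ring. Qed.

Lemma L_U a j : L a j = 2 * U a j.+1 - a * U a j.
Proof.
move: j; apply: (rec_eq a (L a) (fun j => 2 * U a j.+1 - a * U a j) (Lrec a)) => //.
  by move=> i; rewrite !Urec; ring.
by rewrite /U /L /lucasU /lucasV /=; ring.
by rewrite /U /L /lucasU /lucasV /=; ring.
Qed.

Lemma pell_id a j : L a j ^+ 2 - (a ^+ 2 + 4) * U a j ^+ 2 = 4 * (-1) ^+ j.
Proof. by rewrite L_U -(cassini a) /G; ring. Qed.

Lemma shift a (f : nat -> int) :
  (forall j, f j.+2 = a * f j.+1 + f j) ->
  forall j d, f (j + d.+1)%N = U a d.+1 * f j.+1 + U a d * f j.
Proof.
move=> hf j; apply: (rec_eq a (fun d => f (j + d.+1)%N) (fun d => U a d.+1 * f j.+1 + U a d * f j)).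
- by move=> d; rewrite !addnS hf.
- by move=> d; rewrite !Urec; ring.
- by rewrite addn1 /U /lucasU /=; ring.
- by rewrite addn2 hf /U /lucasU /=; ring.
Qed.

Lemma L_pos (a : int) (ha : 0 < a) j : 0 < L a j.+1 < L a j.+2.
Proof.
elim: j => [|j /andP[h1 h2]].
  rewrite /L /lucasV /=; apply/andP; split => //; nia.
rewrite (Lrec a j.+1); apply/andP; split => //; nia.
Qed.

Lemma L_gt0 (a : int) (ha : 0 < a) j : 0 < L a j.
Proof. by case: j => [|j]; [rewrite /L /lucasV /= | case/andP: (L_pos a ha j)]. Qed.

Lemma L_mono (a : int) (ha : 0 < a) i k : (0 < i)%N -> L a i < L a (i + k.+1).
Proof.
case: i => // i _; elim: k => [|k IH].
  by rewrite addn1; case/andP: (L_pos a ha i).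
rewrite addnS; apply: (lt_trans IH); rewrite addSn.
by case/andP: (L_pos a ha (i + k.+1)).
Qed.

Lemma U_pos (a : int) (ha : 0 < a) j : 0 < U a j.+1 /\ 0 <= U a j.
Proof.
elim: j => [|j [h1 h2]]; first by rewrite /U /lucasU /=.
rewrite (Urec a j); split; nia.
Qed.

Lemma key (a s t A B : int) :
  s ^+ 2 - a * s * t - t ^+ 2 = -1 -> B ^+ 2 - a * B * A - A ^+ 2 = a ^+ 2 + 4 ->
  A ^+ 2 - (a * s + 2 * t) * A * (s * B + t * A) + (s * B + t * A) ^+ 2
  = (a * s + 2 * t) ^+ 2 - 4.
Proof.
move=> h1 h2; apply/eqP; rewrite -subr_eq0; apply/eqP.
have -> : A ^+ 2 - (a * s + 2 * t) * A * (s * B + t * A) + (s * B + t * A) ^+ 2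
   - ((a * s + 2 * t) ^+ 2 - 4) =
   (A ^+ 2 + 4) * (s ^+ 2 - a * s * t - t ^+ 2 + 1)
   + s ^+ 2 * (B ^+ 2 - a * B * A - A ^+ 2 - (a ^+ 2 + 4)) by ring.
rewrite h1 h2 subrr; ring.
Qed.

Lemma F_id a j m : odd j -> (0 < m)%N ->
  L a j ^+ 2 - L a (2 * m) * L a j * L a (j + 2 * m) + L a (j + 2 * m) ^+ 2
  = L a (2 * m) ^+ 2 - 4.
Proof.
move=> oj hm.
have [e he] : exists e, (2 * m = e.+1)%N by exists (2 * m).-1; lia.
have oe : odd e.
  have -> : e = (2 * m.-1).+1 by lia.
  by rewrite /= oddM.
rewrite he (shift _ _ (Lrec a)) (L_U a e.+1) Urec.
have h1 := cassini a e; rewrite -signr_odd oe /G expr1 in h1.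
have h2 := LG a j; rewrite -signr_odd oj /G expr1 opprK mul1r in h2.
have := key _ _ _ _ _ h1 h2.
by have -> : 2 * (a * U a e.+1 + U a e) - a * U a e.+1 = a * U a e.+1 + 2 * U a e by ring.
Qed.

Lemma N_id a m : L a (2 * m) ^+ 2 - 4 = (a ^+ 2 + 4) * U a (2 * m) ^+ 2.
Proof.
have := pell_id a (2 * m); rewrite -signr_odd oddM andFb expr0 mulr1.
move=> h; lia.
Qed.

Lemma cass_class (a : int) (ha : 0 < a) (n : nat) : forall u v : int,
  0 < u -> 0 <= v -> u + v <= n%:Z ->
  (G a u v = 1 \/ G a u v = -1) -> exists j, u = U a j.+1 /\ v = U a j.
Proof.
elim: n => [|n IH] u v hu hv hn hG; first by lia.
have [v0|vpos] := eqVneq v 0.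
  exists 0%N; rewrite v0 /U /lucasU /=; split => //.
  move: hG; rewrite /G v0; case; nia.
have hv1 : 1 <= v by lia.
set t := u - a * v.
have hut : u * t = v ^+ 2 + G a u v by rewrite /t /G; ring.
have ht : 0 <= t by case: hG => hG; rewrite hG in hut; nia.
have hvt : v + t <= n%:Z by rewrite /t; nia.
have hG' : G a v t = 1 \/ G a v t = -1.
  have -> : G a v t = - G a u v by rewrite /G /t; ring.
  by case: hG => ->; [right|left].
have [j [e1 e2]] := IH v t (lt_le_trans ltr01 hv1) ht hvt hG'.
exists j.+1; split; last by [].
by rewrite Urec -e1 -e2 /t; ring.
Qed.

Lemma pell_class0 (a : int) (ha : 0 < a) (x w : int) : 0 <= x -> 0 <= w ->
  x ^+ 2 + 4 = (a ^+ 2 + 4) * w ^+ 2 -> exists j, odd j /\ x = L a j.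
Proof.
move=> hx hw E.
have hw1 : 1 <= w by nia.
have hxa : a * w <= x by nia.
have [u hu] : exists u, x + a * w = 2 * u.
  have hd := divz_eq (x + a * w) 2.
  have h0 := @modz_ge0 (x + a * w) 2 isT.
  have h1 := @ltz_pmod (x + a * w) 2 isT.
  move: hd h0 h1; set q := ((x + a * w) %/ 2)%Z; set r := ((x + a * w) %% 2)%Z.
  move=> hd h0 h1.
  have [r0|r1] : r = 0 \/ r = 1 by lia.
    by exists q; rewrite hd r0; ring.
  exfalso.
  have ex : x = 2 * q + 1 - a * w by rewrite r1 in hd; lia.
  rewrite ex in E.
  have : 2 * (a * w) = 4 * (q ^+ 2 + q - q * (a * w) - w ^+ 2) + 5.
    apply/eqP; rewrite -subr_eq0; apply/eqP.
    have -> : 2 * (a * w) - (4 * (q ^+ 2 + q - q * (a * w) - w ^+ 2) + 5)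
      = (a ^+ 2 + 4) * w ^+ 2 - ((2 * q + 1 - a * w) ^+ 2 + 4) by ring.
    by rewrite E subrr.
  move: (q ^+ 2 + q - q * (a * w) - w ^+ 2) (a * w) => A0 B0; lia.
have hu0 : 0 < u by nia.
have hG : G a u w = -1.
  have h4 : 4 * G a u w = 4 * (-1).
    have -> : 4 * G a u w = (2 * u) ^+ 2 - 2 * a * w * (2 * u) - 4 * w ^+ 2 by rewrite /G; ring.
    rewrite -hu.
    have -> : (x + a * w) ^+ 2 - 2 * a * w * (x + a * w) - 4 * w ^+ 2 = x ^+ 2 + 4 - (a ^+ 2 + 4) * w ^+ 2 - 4 by ring.
    by rewrite E subrr sub0r; ring.
  lia.
have [j [e1 e2]] := cass_class a ha (absz (u + w)) u w hu0 hw ltac:(lia) (or_intror hG).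
have hc := cassini a j; rewrite -e1 -e2 hG -signr_odd in hc.
exists j; split.
  by move: hc; case: (odd j) => //; rewrite expr0 => /eqP; rewrite -subr_eq0.
rewrite L_U -e1 -e2; lia.
Qed.

Lemma pell_class (a : int) (ha : 0 < a) (x w : int) : 0 <= x ->
  x ^+ 2 + 4 = (a ^+ 2 + 4) * w ^+ 2 -> exists j, odd j /\ x = L a j.
Proof.
move=> hx E; case: (lerP 0 w) => hw; first exact: (pell_class0 a ha x w hx hw E).
apply: (pell_class0 a ha x (- w) hx); first lia.
by rewrite sqrrN.
Qed.

Definition sqfree (D : nat) := forall p, prime p -> ~~ (p * p %| D)%N.

Lemma sqfree_div0 (N : nat) : forall D : nat, (D <= N)%N -> (0 < D)%N -> sqfree D -> forall y, (D %| y ^ 2)%N -> (D %| y)%N.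
Proof.
elim: N => [|N IH] D hDN hD0 hsq y hy; first by move: hDN hD0; rewrite leqn0 => /eqP ->.
have [D1|D1] := eqVneq D 1%N; first by rewrite D1 dvd1n.
have hD1 : (1 < D)%N by lia.
have pp := pdiv_prime hD1.
set p := pdiv D in pp.
have pD : (p %| D)%N := pdiv_dvd D.
have p0 : (0 < p)%N by apply: prime_gt0.
set D2 := (D %/ p)%N.
have eD : D = (p * D2)%N by rewrite /D2 mulnC divnK.
have py : (p %| y)%N.
  by have := dvdn_trans pD hy; rewrite Euclid_dvdX // andbT.
have [y1 ey] : exists y1, y = (p * y1)%N by exists (y %/ p)%N; rewrite mulnC divnK.
have nD2 : ~~ (p %| D2)%N.
  apply/negP => h; have := hsq p pp; rewrite eD dvdn_pmul2l //; by rewrite h.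
have cD2 : coprime D2 p by rewrite coprime_sym prime_coprime.
have hy1 : (D2 %| y1 ^ 2)%N.
  move: hy; rewrite eD ey expnMn (expnS p 1) expn1 -mulnA dvdn_pmul2l //.
  by rewrite Gauss_dvdr.
have D20 : (0 < D2)%N by move: hD0; rewrite eD muln_gt0 => /andP[].
have sqD2 : sqfree D2.
  move=> q qp; apply/negP => h; have := hsq q qp; rewrite eD.
  by rewrite (dvdn_mull p h).
have lt : (D2 <= N)%N.
  have : (D2 < D)%N by rewrite eD -{1}(mul1n D2) ltn_pmul2r // prime_gt1.
  lia.
have := IH D2 lt D20 sqD2 y1 hy1.
by rewrite eD ey dvdn_pmul2l.
Qed.

Lemma sqfree_div (D : nat) : (0 < D)%N -> sqfree D -> forall y, (D %| y ^ 2)%N -> (D %| y)%N.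
Proof. exact: (@sqfree_div0 D D (leqnn D)). Qed.

Lemma sq_nat (D U z c : nat) : (0 < D)%N -> (0 < U)%N -> sqfree D ->
  (z ^ 2 = D * U ^ 2 * c)%N -> exists w, c = (D * w ^ 2)%N.
Proof.
move=> D0 U0 sq E.
have : (U ^ 2 %| z ^ 2)%N by rewrite E dvdn_mulr // dvdn_mull.
rewrite dvdn_pexp2r // => /dvdnP [z1 ez].
rewrite ez expnMn in E.
have E1 : (z1 ^ 2 = D * c)%N.
  apply/eqP; rewrite -(eqn_pmul2r (_ : 0 < U ^ 2)%N) ?expn_gt0 ?U0 //.
  by rewrite E; apply/eqP; ring.
have : (D %| z1)%N by apply: sqfree_div => //; rewrite E1 dvdn_mulr.
case/dvdnP => w ew; exists w.
apply/eqP; rewrite -(eqn_pmul2l D0) -E1 ew; apply/eqP; ring.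
Qed.

Lemma sq_int (D U z c : int) : 0 < D -> 0 < U -> 0 <= c -> sqfree (absz D) ->
  z ^+ 2 = D * U ^+ 2 * c -> exists w : int, c = D * w ^+ 2.
Proof.
move=> D0 U0 c0 sq E.
have [w ew] : exists w, absz c = (absz D * w ^ 2)%N.
  apply: (sq_nat (absz D) (absz U) (absz z)) => //; [lia|lia|].
  by rewrite -abszX -!abszX -!abszM E.
exists w%:Z.
rewrite -(gez0_abs c0) -(gtz0_abs D0) ew PoszM; congr (_ * _).

Qed.
Local Close Scope ring_scope.

Lemma sum_sub (s t : seq nat) (f : nat -> nat) : uniq t -> {subset t <= s} -> uniq s ->
  \sum_(d <- t) f d <= \sum_(d <- s) f d.
Proof.
move=> ut sub us.
have pf : perm_eq ([seq x <- s | mem t x] ++ [seq x <- s | predC (mem t) x]) s.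
  by rewrite perm_filterC.
rewrite -(perm_big _ pf) big_cat /=.
have pe : perm_eq (filter (mem t) s) t.
  apply: uniq_perm => //; first exact: filter_uniq.
  move=> d; rewrite mem_filter /=; apply/andP/idP => [[]//|h]; split=> //; exact: sub.
by rewrite (perm_big _ pe) leq_addr.
Qed.

Lemma sigma_ge n r : 1 < r -> r %| n -> r < n ->
  1 + r ^ 2 + n ^ 2 <= sigma 2 n.
Proof.
move=> r1 rn rlt.
have n0 : 0 < n by lia.
have := @sum_sub (divisors n) [:: 1; r; n] (fun d => d ^ 2).
rewrite /sigma !big_cons big_nil addn0 exp1n addnA; apply.
- rewrite /= !inE !negb_or !andbT; rewrite -!(rwP andP) -!(rwP negP) -!(rwP eqP); lia.
- move=> d; rewrite !inE -!dvdn_divisors //.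
  by case/or3P => /eqP ->; rewrite ?dvd1n ?dvdnn.
- exact: divisors_uniq.
Qed.

Lemma dvd_pq p q d : prime p -> prime q -> d %| p * q ->
  [\/ d = 1, d = p, d = q | d = p * q].
Proof.
move=> pp pq hd.
have hq : forall e, e %| q -> e = 1 \/ e = q.
  by move=> e he; case/primeP: pq => _ /(_ e he) /orP [] /eqP; [left|right].
case: (boolP (p %| d)) => pd.
  case/dvdnP: pd => e de; rewrite de [e * p]mulnC in hd.
  rewrite dvdn_pmul2l ?prime_gt0 // in hd.
  by rewrite de; case: (hq e hd) => ->; [apply: Or42; lia | apply: Or44; lia].
have cp : coprime d p by rewrite coprime_sym prime_coprime.
rewrite mulnC Gauss_dvdl // in hd.
by case: (hq d hd) => ->; [apply: Or41|apply: Or43].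
Qed.

Lemma sigma_pq p q : prime p -> prime q -> p != q ->
  sigma 2 (p * q) = 1 + p ^ 2 + q ^ 2 + (p * q) ^ 2.
Proof.
move=> pp pq pnq.
have p1 := prime_gt1 pp; have q1 := prime_gt1 pq.
have pe : perm_eq (divisors (p * q)) [:: 1; p; q; p * q].
  apply: uniq_perm; first exact: divisors_uniq.
    move/eqP: pnq => pnq.
    rewrite /= !inE !negb_or !andbT; rewrite -!(rwP andP) -!(rwP negP) -!(rwP eqP); nia.
  move=> d; rewrite -dvdn_divisors ?muln_gt0 ?(prime_gt0 pp) ?(prime_gt0 pq) // !inE.
  apply/idP/idP.
    by case/(dvd_pq _ _ _ pp pq) => ->; rewrite eqxx ?orbT.
  by move=> /or4P [] /eqP ->; [exact: dvd1n | exact: dvdn_mulr | exact: dvdn_mull | exact: dvdnn].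
by rewrite /sigma (perm_big _ pe) !big_cons big_nil exp1n /= addn0 !addnA.
Qed.

Lemma sigma_pp p : prime p ->
  sigma 2 (p * p) = 1 + p ^ 2 + (p * p) ^ 2.
Proof.
move=> pp.
have p1 := prime_gt1 pp.
have pe : perm_eq (divisors (p * p)) [:: 1; p; p * p].
  apply: uniq_perm; first exact: divisors_uniq.
    rewrite /= !inE !negb_or !andbT; rewrite -!(rwP andP) -!(rwP negP) -!(rwP eqP); nia.
  move=> d; rewrite -dvdn_divisors ?muln_gt0 ?(prime_gt0 pp) // !inE.
  apply/idP/idP.
    by case/(dvd_pq _ _ _ pp pp) => ->; rewrite eqxx ?orbT.
  by move=> /or3P [] /eqP ->; [exact: dvd1n | exact: dvdn_mulr | exact: dvdnn].
by rewrite /sigma (perm_big _ pe) !big_cons big_nil exp1n /= addn0 !addnA.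
Qed.

Lemma sigma_p p : prime p -> sigma 2 p = 1 + p ^ 2.
Proof.
move=> pp.
have p1 := prime_gt1 pp.
have pe : perm_eq (divisors p) [:: 1; p].
  apply: uniq_perm; first exact: divisors_uniq.
    rewrite /= !inE andbT; apply/eqP; lia.
  move=> d; rewrite -dvdn_divisors ?(prime_gt0 pp) // !inE.
  apply/idP/idP; first by case/primeP: pp => _ /(_ d) h /h.
  by case/orP => /eqP ->; [exact: dvd1n | exact: dvdnn].
by rewrite /sigma (perm_big _ pe) !big_cons big_nil exp1n /= addn0.
Qed.
Local Open Scope ring_scope.

Lemma main_pos (a : int) (m n : nat) : 0 < a -> sqfree (absz (a ^+ 2 + 4)) -> (0 < n)%N ->
  (sigma 2 n)%:Z - n%:Z ^+ 2 = L a (2 * m) * n%:Z + L a (2 * m) ^+ 2 - 3 ->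
  (L a (2 * m) + L a (2 * m) ^+ 2 - 3) ^+ 3 < n%:Z ->
  exists k, n%:Z = L a (2 * k + 1) * L a (2 * k + 2 * m + 1)
      /\ prime (absz (L a (2 * k + 1))) /\ prime (absz (L a (2 * k + 2 * m + 1))).
Proof.
move=> ha hsq hn.
set V := L a (2 * m) => E hB.
have hV2 : 2 <= V.
  rewrite /V; clear E hB V; case: m => [|m]; first by rewrite /L /lucasV.
  have -> : (2 * m.+1 = 1 + (2 * m).+1)%N by lia.
  have := L_mono a ha 1 (2 * m) isT.
  have : L a 1 = a by [].
  lia.
set B := V + V ^+ 2 - 3.
have hB3 : 3 <= B by rewrite /B; move: hV2; clear; nia.
have hn1 : (1 < n)%N.
  have h9 : 9 <= B * B by move: hB3; clear; nia.
  have h27 : 27 <= B * B * B by move: hB3 h9; clear; nia.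
  move: hB; rewrite -/B !exprS expr0 mulr1 mulrA; move: h27; clear; lia.
have pp := pdiv_prime hn1.
set p := pdiv n in pp.
have p1 := prime_gt1 pp.
set r := (n %/ p)%N.
have enr : n = (p * r)%N by rewrite /r mulnC divnK // pdiv_dvd.
have nnp : ~~ prime n.
  apply/negP => np; rewrite (sigma_p _ np) in E.
  have h4 : 4 <= V ^+ 2 by move: hV2; clear; nia.
  have h5 : 2 <= V * n%:Z by move: hV2 hn; clear; nia.
  move: E h4 h5; clear; lia.
have r1 : (1 < r)%N.
  have : r != 1%N by apply: contra nnp; rewrite enr => /eqP ->; rewrite muln1.
  have : (0 < r)%N by move: hn; rewrite enr muln_gt0 => /andP[].
  lia.
have rn : (r < n)%N by rewrite enr; move: p1 r1; clear; nia.
have rdn : (r %| n)%N by rewrite enr dvdn_mull.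
have sg := sigma_ge _ _ r1 rdn rn.
have h0 : r%:Z ^+ 2 + 1 <= V * n%:Z + V ^+ 2 - 3.
  have hs : ((1 + r ^ 2 + n ^ 2)%N%:Z <= (sigma 2 n)%:Z) by rewrite lez_nat.
  move: hs E; clear; lia.
have hn0 : 1 <= n%:Z by lia.
have hBn : V * n%:Z + V ^+ 2 - 3 <= B * n%:Z.
  have : (V ^+ 2 - 3) * 1 <= (V ^+ 2 - 3) * n%:Z by apply: ler_wpM2l; nia.
  rewrite /B; lia.
have h1 : r%:Z * r%:Z < B * p%:Z * r%:Z.
  have -> : B * p%:Z * r%:Z = B * n%:Z by rewrite enr PoszM mulrA.
  move: h0 hBn; clear; lia.
have h2 : r%:Z < B * p%:Z.
  have r0 : 0 < r%:Z by lia.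
  move: h1 r0; clear; nia.
have h3 : B < p%:Z.
  have h4 : B ^+ 3 < B * (p%:Z * p%:Z).
    have : (p * r)%N%:Z < B * p%:Z * p%:Z.
      rewrite PoszM; have p0 : 0 < p%:Z by lia. move: h2 p0; clear; nia.
    rewrite -enr; move: hB; rewrite -/B; clear; nia.
  have hB0 : 0 < B by lia.
  rewrite ltNge; apply/negP => hpB.
  have p0 : 0 <= p%:Z by lia.
  have hpp : p%:Z * p%:Z <= B * B by move: hpB p0; clear; nia.
  have : B * (p%:Z * p%:Z) <= B * (B * B) by apply: ler_wpM2l; lia.
  move: h4; rewrite !exprS expr0 mulr1; lia.
have rp : prime r.
  apply/negPn/negP => nrp.
  have ps := pdiv_prime r1; set s := pdiv r in ps.
  have sr : (s %| r)%N := pdiv_dvd r.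
  set t := (r %/ s)%N.
  have ers : r = (s * t)%N by rewrite /t mulnC divnK.
  have t1 : (1 < t)%N.
    have : t != 1%N by apply: contra nrp; rewrite ers => /eqP ->; rewrite muln1.
    have : (0 < t)%N by move: r1; rewrite ers; clear; case: t => //; rewrite muln0.
    lia.
  have s1 := prime_gt1 ps.
  have hps : (p <= s)%N by apply: pdiv_min_dvd => //; rewrite enr ers dvdn_mull // dvdn_mulr.
  have hpt : (p <= t)%N by apply: pdiv_min_dvd => //; rewrite enr ers dvdn_mull // dvdn_mull.
  have : (p * p <= r)%N by rewrite ers leq_mul.
  have p0 : 0 < p%:Z by lia.
  have : B * p%:Z < p%:Z * p%:Z by rewrite ltr_pM2r.
  move: h2; clear; lia.
set q := r in rp r1 rn rdn sg h1 h2 enr.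
have hpq : (p <= q)%N by apply: pdiv_min_dvd.
have pnq : p != q.
  apply/negP => /eqP epq.
  move: E; rewrite enr -epq (sigma_pp _ pp) => E.
  have h4 : 4 <= V ^+ 2 by move: hV2; clear; nia.
  have h5 : 2 * (p * p)%N%:Z <= V * (p * p)%N%:Z by apply: ler_wpM2r; lia.
  move: E h4 h5 p1; clear; lia.
rewrite enr (sigma_pq _ _ pp rp pnq) in E.
have F : p%:Z ^+ 2 - V * p%:Z * q%:Z + q%:Z ^+ 2 = V ^+ 2 - 4 by move: E; clear; nia.
have hpq' : (p < q)%N by rewrite ltn_neqAle pnq hpq.
have m0 : (0 < m)%N.
  rewrite lt0n; apply/negP => /eqP em0.
  have V2 : V = 2 by rewrite /V em0.
  rewrite V2 in F.
  have : (p%:Z - q%:Z) ^+ 2 = 0 by rewrite -[RHS](subrr 4) -[in RHS]F; ring.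
  move/eqP; rewrite sqrf_eq0 subr_eq0 => /eqP; move/eqP: pnq; clear; lia.
have hU : 0 < U a (2 * m).
  have -> : (2 * m = (2 * m).-1.+1)%N by move: m0; clear; lia.
  by case: (U_pos a ha (2 * m).-1).
have Ez : (2 * q%:Z - V * p%:Z) ^+ 2 = (a ^+ 2 + 4) * U a (2 * m) ^+ 2 * (p%:Z ^+ 2 + 4).
  rewrite -N_id -/V.
  have -> : (2 * q%:Z - V * p%:Z) ^+ 2 = 4 * (p%:Z ^+ 2 - V * p%:Z * q%:Z + q%:Z ^+ 2) + (V ^+ 2 - 4) * p%:Z ^+ 2 by ring.
  rewrite F; ring.
have hD0 : 0 < a ^+ 2 + 4 by clear; nia.
have hc0 : 0 <= p%:Z ^+ 2 + 4 by clear; nia.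
have [w ew] := sq_int _ _ _ _ hD0 hU hc0 hsq Ez.
have [j [oj ej]] := pell_class a ha p%:Z w ltac:(clear; lia) ew.
have j0 : (0 < j)%N by move: oj; clear; case: j.
have hlt : L a j < L a (j + 2 * m).
  have -> : (2 * m = (2 * m).-1.+1)%N by move: m0; clear; lia.
  exact: L_mono.
have Fr := F_id a j m oj m0; rewrite -/V -ej in Fr.
set r' := L a (j + 2 * m) in hlt Fr.
have eq : q%:Z = r'.
  have fac : (q%:Z - r') * (q%:Z + r' - V * p%:Z) = 0.
    have -> : (q%:Z - r') * (q%:Z + r' - V * p%:Z) =
      (p%:Z ^+ 2 - V * p%:Z * q%:Z + q%:Z ^+ 2) - (p%:Z ^+ 2 - V * p%:Z * r' + r' ^+ 2) by ring.
    by rewrite F Fr subrr.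
  move/eqP: fac; rewrite mulf_eq0 => /orP [/eqP h|/eqP h]; first by move: h; clear; lia.
  exfalso.
  have eq2 : q%:Z = V * p%:Z - r' by move: h; clear; lia.
  have : q%:Z * r' = p%:Z ^+ 2 - (V ^+ 2 - 4) by rewrite eq2 -Fr; ring.
  rewrite -ej in hlt => hqr.
  have p0 : 0 <= p%:Z by clear; lia.
  have r0 : 0 < r' by move: hlt p0; clear; lia.
  have i1 : p%:Z * p%:Z <= p%:Z * r' by apply: ler_wpM2l => //; move: hlt; clear; lia.
  have i2 : p%:Z * r' < q%:Z * r' by rewrite ltr_pM2r //; move: hpq'; clear; lia.
  have h4 : 4 <= V ^+ 2 by move: hV2; clear; nia.
  move: hqr i1 i2 h4; clear; nia.
exists j./2.
have ej2 : (2 * j./2 + 1 = j)%N.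
  by have := odd_double_half j; rewrite oj -muln2 /=; clear; lia.
have ej3 : (2 * j./2 + 2 * m + 1 = j + 2 * m)%N by move: ej2; clear; lia.
rewrite ej2 ej3 -/r' -eq -ej enr PoszM.
by split; [|split].
Qed.

Lemma Lneg (a : int) j : L (- a) j = (-1) ^+ j * L a j.
Proof.
move: j; apply: (rec_eq (- a) (L (- a)) (fun j => (-1) ^+ j * L a j) (Lrec (- a))).
- by move=> j; rewrite Lrec !exprS; ring.
- by rewrite /L /lucasV /=; ring.
- by rewrite /L /lucasV /=; ring.
Qed.

Lemma sqf_conv (X : int) : squarefree_int X -> sqfree (absz X).
Proof.
move=> h p pp; apply/negP => hd; apply: (h p pp).
by rewrite dvdzE abszM.
Qed.

Theorem theorem1p5 (P : int) (m n : nat) :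
  squarefree_int (P ^+ 2 + 4) ->
  (0 < n)%N ->
  let V := lucasV P (-1) (2 * m) in
  (sigma 2 n)%:Z - n%:Z ^+ 2 = V * n%:Z + V ^+ 2 - 3 ->
  (`|V| + V ^+ 2 - 3) ^+ 3 < n%:Z ->
  (exists k : nat,
      n%:Z = lucasV P (-1) (2 * k + 1) * lucasV P (-1) (2 * k + 2 * m + 1)
      /\ prime `|lucasV P (-1) (2 * k + 1)|%N
      /\ prime `|lucasV P (-1) (2 * k + 2 * m + 1)|%N)
  \/
  (exists k : nat,
      [/\ (k < m)%N, m <> (2 * k + 1)%N,
          n%:Z = lucasV P (-1) (2 * k + 1) * lucasV P (-1) (2 * m - 2 * k - 1),
          prime `|lucasV P (-1) (2 * k + 1)|%N
        & prime `|lucasV P (-1) (2 * m - 2 * k - 1)|%N]).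
Proof.
move=> hsq hn V E hB; left.
have P0 : P != 0.
  apply/eqP => P0; apply: (hsq 2%N isT); by rewrite P0.
have hsq' := sqf_conv _ hsq.
case: (ltrP P 0) => hP.
- have ha : 0 < - P by rewrite oppr_gt0.
  have eP : P = - - P by rewrite opprK.
  move: (- P) ha eP => a ha eP.
  have eV : V = L a (2 * m).
    by rewrite /V -/(L P _) eP Lneg -signr_odd oddM andFb expr0 mul1r.
  have V0 : 0 <= V by rewrite eV; apply: ltW; apply: L_gt0.
  rewrite (ger0_norm V0) eV in hB; rewrite eV in E.
  rewrite eP sqrrN in hsq'.
  have [k [e1 [e2 e3]]] := main_pos a m n ha hsq' hn E hB.
  exists k; rewrite -!/(L P _) eP !Lneg.
  have o1 : odd (2 * k + 1) by rewrite addn1 /= oddM.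
  have o2 : odd (2 * k + 2 * m + 1) by rewrite addn1 /= oddD !oddM.
  rewrite -(signr_odd _ (2 * k + 1)) -(signr_odd _ (2 * k + 2 * m + 1)) o1 o2 expr1 !mulN1r.
  by rewrite mulrNN !abszN.
- have ha : 0 < P by rewrite lt_neqAle eq_sym P0.
  have V0 : 0 <= V by apply: ltW; apply: L_gt0.
  rewrite (ger0_norm V0) in hB.
  exact: (main_pos P m n ha hsq' hn E hB).
Qed.
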